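(* $R_{2/2,3}=1+\sqrt3$. Every element of $\Pi_{2/2,3}$ can be written as \[ \psi_a(z)=\frac{\left(\frac13+\frac a2\right)z^2+(a+1)z+1}{\left(-\frac a2-\frac16\right)z^2+az+1},\qquad a\in\mathbb{R}. \] The value $1+\sqrt3$ is attained by $a=-1+\frac{1}{\sqrt3}$, and $R(\psi_a)<1+\sqrt3$ for all $a\ne -1+\frac1{\sqrt3}$.
   Context: A real rational function $\psi$ is always considered in lowest terms, as a smooth function on $\mathbb{R}$ minus its finitely many poles. It is absolutely monotonic at $x\in\mathbb{R}$ if $x$ is not a pole and $\psi^{(k)}(x)\ge 0$ for all integers $k\ge 0$. The radius of absolute monotonicity is $R(\psi)=\sup\big(\{r\in[0,\infty): \psi \text{ is absolutely monotonic at each point of } [-r,0]\}\cup\{0\}\big)\in[0,+\infty]$. For $m,n,p\in\mathbb{N}$, $\Pi_{m/n,p}$ denotes the set of rational functions $\psi=P/Q$ with $P,Q$ real polynomials, $\deg P\le m$, $Q\not\equiv 0$, $\deg Q\le n$, such that $\psi(z)-e^z=O(z^{p+1})$ as $z\to 0$. Finally, $R_{m/n,p}=\sup\{R(\psi):\psi\in\Pi_{m/n,p}\}$. *)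

(* Defs.v *)
From Stdlib Require Import Reals Lra List.
Import ListNotations.
Open Scope R_scope.

(* Real polynomials as coefficient lists, lowest degree first. *)
Definition poly := list R.

Fixpoint peval (p : poly) (x : R) : R :=
  match p with
  | [] => 0
  | c :: q => c + x * peval q x
  end.

Definition deg_le (p : poly) (m : nat) : Prop := (length p <= S m)%nat.

Definition poly_nonzero (p : poly) : Prop := exists i, nth i p 0 <> 0.

(* P and Q coprime in R[x] (Bezout identity), i.e. P/Q is in lowest terms. *)
Definition coprime_poly (P Q : poly) : Prop :=
  exists U V : poly, forall x, peval U x * peval P x + peval V x * peval Q x = 1.

Inductive nderiv (U : R -> Prop) : nat -> (R -> R) -> (R -> R) -> Prop :=
| nderiv0 : forall f, nderiv U 0 f f
| nderivS : forall n f g h, nderiv U n f g ->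
    (forall y, U y -> derivable_pt_lim g y (h y)) -> nderiv U (S n) f h.

(* For P0/Q0 in lowest terms: absolutely monotonic at x. Poles = real zeros of Q0. *)
Definition abs_mono_at (P0 Q0 : poly) (x : R) : Prop :=
  let U := fun y => peval Q0 y <> 0 in
  let psi := fun y => peval P0 y / peval Q0 y in
  U x /\
  forall k : nat,
    (exists g, nderiv U k psi g) /\
    (forall g, nderiv U k psi g -> 0 <= g x).

(* psi = P/Q (any representation, Q nonzero) is absolutely monotonic at
   each point of [-r,0]: computed on the lowest-terms representation. *)
Definition am_on (P Q : poly) (r : R) : Prop :=
  exists P0 Q0 : poly,
    coprime_poly P0 Q0 /\ poly_nonzero Q0 /\
    (forall x, peval P0 x * peval Q x = peval P x * peval Q0 x) /\
    (forall x, -r <= x <= 0 -> abs_mono_at P0 Q0 x).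

(* The set whose supremum is R(P/Q): {r >= 0 | am on [-r,0]} ∪ {0}. *)
Definition R_set (P Q : poly) (r : R) : Prop :=
  r = 0 \/ (0 <= r /\ am_on P Q r).

(* P/Q in Pi_{m/n,p}: psi(z) - e^z = O(z^(p+1)) as z -> 0
   (bound on a punctured-by-poles neighbourhood of 0). *)
Definition in_Pi (m n p : nat) (P Q : poly) : Prop :=
  deg_le P m /\ deg_le Q n /\ poly_nonzero Q /\
  exists C delta : R, 0 < delta /\
    forall z, Rabs z < delta -> peval Q z <> 0 ->
      Rabs (peval P z / peval Q z - exp z) <= C * Rabs z ^ (p + 1).

(* The set whose supremum is R_{m/n,p}. *)
Definition Rmnp_set (m n p : nat) (r : R) : Prop :=
  r = 0 \/ exists P Q, in_Pi m n p P Q /\ 0 <= r /\ am_on P Q r.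

Definition Pa (a : R) : poly := [1; a + 1; 1/3 + a/2].
Definition Qa (a : R) : poly := [1; a; - a/2 - 1/6].

Definition a_star : R := -1 + 1 / sqrt 3.

(* Main.v *)
Require Import Defs.
From Stdlib Require Import Reals Lra Lia Psatz List Nsatz Classical.
From Coquelicot Require Import Coquelicot.
Import ListNotations.
Open Scope R_scope.

Lemma dl_ext_loc (f g : R -> R) y l :
  (exists d, 0 < d /\ forall z, Rabs (z - y) < d -> f z = g z) ->
  derivable_pt_lim f y l -> derivable_pt_lim g y l.
Proof.
  intros [d [Hd Hfg]] Hf eps Heps.
  destruct (Hf eps Heps) as [d1 Hd1].
  assert (Hm : 0 < Rmin d d1) by (apply Rmin_pos; [lra | apply (cond_pos d1)]).
  exists (mkposreal _ Hm). intros h Hh0 Hh. simpl in Hh.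
  rewrite <- (Hfg y) by (rewrite Rminus_diag, Rabs_R0; lra).
  rewrite <- (Hfg (y+h)).
  - apply Hd1; auto. apply Rlt_le_trans with (1:=Hh). apply Rmin_r.
  - replace (y + h - y) with h by ring. apply Rlt_le_trans with (1:=Hh). apply Rmin_l.
Qed.

Lemma dl_ext (f g : R -> R) y l :
  (forall z, f z = g z) -> derivable_pt_lim f y l -> derivable_pt_lim g y l.
Proof. intros H. apply dl_ext_loc. exists 1. split; [lra|]. intros; auto. Qed.

Lemma dl_plus f g y a b : derivable_pt_lim f y a -> derivable_pt_lim g y b ->
  derivable_pt_lim (fun z => f z + g z) y (a+b).
Proof. intros. apply (derivable_pt_lim_plus f g); auto. Qed.
Lemma dl_minus f g y a b : derivable_pt_lim f y a -> derivable_pt_lim g y b ->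
  derivable_pt_lim (fun z => f z - g z) y (a-b).
Proof. intros. apply (derivable_pt_lim_minus f g); auto. Qed.
Lemma dl_mult f g y a b : derivable_pt_lim f y a -> derivable_pt_lim g y b ->
  derivable_pt_lim (fun z => f z * g z) y (a * g y + f y * b).
Proof. intros. apply (derivable_pt_lim_mult f g); auto. Qed.
Lemma dl_div f g y a b : derivable_pt_lim f y a -> derivable_pt_lim g y b -> g y <> 0 ->
  derivable_pt_lim (fun z => f z / g z) y ((a * g y - b * f y) / (g y)²).
Proof. intros. apply (derivable_pt_lim_div f g); auto. Qed.
Lemma dl_const c y : derivable_pt_lim (fun _ => c) y 0.
Proof. apply (derivable_pt_lim_const c). Qed.
Lemma dl_id y : derivable_pt_lim (fun z => z) y 1.
Proof. apply derivable_pt_lim_id. Qed.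

Lemma peval_deriv (p : Defs.poly) y : exists l, derivable_pt_lim (peval p) y l.
Proof.
  induction p as [|c q IH]; simpl.
  - exists 0. apply (dl_ext (fun _ => 0)); [reflexivity| apply dl_const].
  - destruct IH as [l Hl]. eexists.
    apply (dl_ext (fun z => c + z * peval q z)); [reflexivity|].
    apply dl_plus; [apply dl_const|]. apply dl_mult; [apply dl_id| exact Hl].
Qed.

Lemma peval_cont (p : Defs.poly) y : continuity_pt (peval p) y.
Proof.
  destruct (peval_deriv p y) as [l Hl].
  apply derivable_continuous_pt. exists l. exact Hl.
Qed.

Lemma cont_nonzero (f : R -> R) y : continuity_pt f y -> f y <> 0 ->
  exists d, 0 < d /\ forall z, Rabs (z - y) < d -> f z <> 0.
Proof.
  intros Hc Hy.
  assert (He : 0 < Rabs (f y) / 2) by (apply Rabs_pos_lt in Hy; lra).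
  destruct (Hc _ He) as [d [Hd H]].
  exists d. split; auto. intros z Hz Hfz.
  destruct (Req_dec z y) as [->|Hne]; [contradiction|].
  assert (Hdist : dist R_met z y < d) by (simpl; unfold R_dist; auto).
  specialize (H z (conj (conj I (not_eq_sym Hne)) Hdist)). simpl in H; unfold R_dist in H.
  rewrite Hfz in H. rewrite Rminus_0_l, Rabs_Ropp in H. lra.
Qed.
Definition bb (a:R) := -a/2 - 1/6.
Definition pp (a:R) := 1/3 + a/2.
Lemma Qv_eq a y : peval (Qa a) y = 1 + a*y + bb a * y^2.
Proof. unfold Qa, bb; simpl; ring. Qed.
Lemma Pv_eq a y : peval (Pa a) y = 1 + (a+1)*y + pp a * y^2.
Proof. unfold Pa, pp; simpl; ring. Qed.
Definition Qd a y := a + 2*bb a*y.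
Definition Pd a (k:nat) y := match k with 0 => peval (Pa a) y | 1 => (a+1) + 2*pp a*y | 2 => 2*pp a | _ => 0 end.

Fixpoint Dpair a (k:nat) : (R->R)*(R->R) :=
 match k with
 | O => (fun y => peval (Pa a) y / peval (Qa a) y,
         fun y => (Pd a 1 y - Qd a y * (peval (Pa a) y / peval (Qa a) y)) / peval (Qa a) y)
 | S k' => (snd (Dpair a k'),
        fun y => (Pd a (S (S k')) y - INR (S (S k')) * Qd a y * snd (Dpair a k') y
                   - INR (S (S k')) * INR (S k') * bb a * fst (Dpair a k') y) / peval (Qa a) y)
 end.
Definition Dk a k := fst (Dpair a k).

Lemma dQ a y : derivable_pt_lim (fun z => peval (Qa a) z) y (Qd a y).
Proof.
  apply (dl_ext (fun z => 1 + a*z + bb a * z^2)); [intros; rewrite Qv_eq; ring|].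
  apply is_derive_Reals. auto_derive; auto. unfold Qd; ring.
Qed.

Lemma dPd a k y : derivable_pt_lim (fun z => Pd a k z) y (Pd a (S k) y).
Proof.
  destruct k as [|[|[|k]]]; simpl; apply is_derive_Reals; auto_derive; auto; unfold pp; ring.
Qed.

Lemma quot_step a (num : R -> R) n' y L : peval (Qa a) y <> 0 ->
  derivable_pt_lim num y n' ->
  L = (n' - Qd a y * (num y / peval (Qa a) y)) / peval (Qa a) y ->
  derivable_pt_lim (fun z => num z / peval (Qa a) z) y L.
Proof.
  intros HQ Hn ->.
  replace ((n' - Qd a y * (num y / peval (Qa a) y)) / peval (Qa a) y)
    with ((n' * peval (Qa a) y - Qd a y * num y) / (peval (Qa a) y)²) by (unfold Rsqr; field; auto).
  apply dl_div; auto. apply dQ.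
Qed.

Lemma dl_mult' f g y a b L : derivable_pt_lim f y a -> derivable_pt_lim g y b ->
  L = a * g y + f y * b -> derivable_pt_lim (fun z => f z * g z) y L.
Proof. intros H1 H2 ->. apply dl_mult; auto. Qed.

Lemma dQd a y : derivable_pt_lim (fun z => Qd a z) y (2 * bb a).
Proof. unfold Qd. apply is_derive_Reals. auto_derive; auto. ring. Qed.

Lemma dcQd a c y : derivable_pt_lim (fun z => c * Qd a z) y (c * (2 * bb a)).
Proof. unfold Qd. apply is_derive_Reals. auto_derive; auto. ring. Qed.

Lemma Dpair_deriv a k y : peval (Qa a) y <> 0 ->
  derivable_pt_lim (fst (Dpair a k)) y (snd (Dpair a k) y) /\
  derivable_pt_lim (snd (Dpair a k)) y (snd (Dpair a (S k)) y).
Proof.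
  intros HQ. induction k as [|k IH].
  - assert (H0 : derivable_pt_lim (fst (Dpair a 0)) y (snd (Dpair a 0) y)).
    { cbn [Dpair fst snd]. eapply (quot_step a (fun z => peval (Pa a) z)); [auto|apply (dPd a 0)|reflexivity]. }
    split; auto.
    cbn [Dpair fst snd] in *. eapply quot_step; [auto| |].
    + eapply dl_minus. apply (dPd a 1).
      eapply dl_mult'; [apply dQd| exact H0 | reflexivity].
    + cbn [Pd]. simpl INR. field; auto.
  - destruct IH as [IH1 IH2]. split; [exact IH2|].
    cbn [Dpair fst snd] in *.
    eapply quot_step; [auto| |].
    + eapply dl_minus; [eapply dl_minus|].
      * apply dPd.
      * eapply dl_mult'; [apply dcQd| exact IH2| reflexivity].
      * eapply dl_mult'; [apply dl_const| exact IH1| reflexivity].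
    + rewrite !S_INR. field; auto.
Qed.

Lemma Dk_deriv a k y : peval (Qa a) y <> 0 -> derivable_pt_lim (Dk a k) y (Dk a (S k) y).
Proof. intros H. exact (proj1 (Dpair_deriv a k y H)). Qed.

Lemma nderiv_D a k : nderiv (fun y => peval (Qa a) y <> 0) k
   (fun y => peval (Pa a) y / peval (Qa a) y) (Dk a k).
Proof.
  induction k as [|k IH].
  - apply nderiv0.
  - apply (nderivS _ k _ (Dk a k)); auto.
    intros y Hy. apply Dk_deriv; auto.
Qed.

Lemma nderiv_unique a (U : R -> Prop) f :
  (forall y, U y <-> peval (Qa a) y <> 0) -> (forall y, U y -> f y = Dk a 0 y) ->
  forall k g, nderiv U k f g -> forall y, U y -> g y = Dk a k y.
Proof.
  intros HU Hf k g Hn. revert Hf. induction Hn as [f0|n f0 g h Hn IH Hd]; intros Hf.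
  - exact Hf.
  - specialize (IH Hf). intros y Hy.
    assert (HQ : peval (Qa a) y <> 0) by (apply HU; auto).
    apply (uniqueness_limite g y); [apply Hd; auto|].
    apply (dl_ext_loc (Dk a n)); [|apply Dk_deriv; auto].
    destruct (cont_nonzero (peval (Qa a)) y (peval_cont _ y) HQ) as [d [Hd0 Hz]].
    exists d. split; auto. intros z Hzy. symmetry. apply IH. apply HU. apply Hz; auto.
Qed.

Lemma quad_repr (Q : Defs.poly) : deg_le Q 2 ->
  forall x, peval Q x = nth 0 Q 0 + nth 1 Q 0 * x + nth 2 Q 0 * x^2.
Proof.
  unfold deg_le. intros H x.
  destruct Q as [|q0 [|q1 [|q2 [|q3 Q]]]]; simpl in *; try lia; ring.
Qed.

Lemma quad_nonzero (Q : Defs.poly) : deg_le Q 2 -> poly_nonzero Q ->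
  ~ (nth 0 Q 0 = 0 /\ nth 1 Q 0 = 0 /\ nth 2 Q 0 = 0).
Proof.
  unfold deg_le. intros H [i Hi] [H0 [H1 H2]].
  destruct i as [|[|[|i]]]; auto.
  apply Hi. apply nth_overflow. lia.
Qed.

Lemma three_pts (Q : Defs.poly) y h : deg_le Q 2 -> poly_nonzero Q -> h <> 0 ->
  peval Q y = 0 -> peval Q (y+h) = 0 -> peval Q (y-h) = 0 -> False.
Proof.
  intros Hd Hn Hh E1 E2 E3. apply (quad_nonzero Q Hd Hn).
  rewrite !(quad_repr Q Hd) in *.
  set (q0 := nth 0 Q 0) in *. set (q1 := nth 1 Q 0) in *. set (q2 := nth 2 Q 0) in *.
  assert (Hq2 : q2 = 0).
  { assert (Hhh : h*h <> 0) by (apply Rmult_integral_contrapositive; auto).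
    apply (Rmult_eq_reg_l (2*(h*h))); [|apply Rmult_integral_contrapositive; split; auto; lra].
    transitivity ((q0 + q1 * (y + h) + q2 * (y + h) ^ 2) + (q0 + q1 * (y - h) + q2 * (y - h) ^ 2)
      - 2 * (q0 + q1 * y + q2 * y ^ 2)); [ring|]. rewrite E1, E2, E3. ring. }
  assert (Hq1 : q1 = 0).
  { apply (Rmult_eq_reg_l (2*h)); [|lra].
    transitivity ((q0 + q1 * (y + h) + q2 * (y + h) ^ 2) - (q0 + q1 * (y - h) + q2 * (y - h) ^ 2)
      - 4 * q2 * y * h); [ring|]. rewrite E2, E3, Hq2. ring. }
  split; [|split; auto].
  rewrite Hq1, Hq2 in E1. lra.
Qed.

Lemma poly_id_everywhere (F : R -> R) (Q : Defs.poly) :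
  (forall y, continuity_pt F y) -> deg_le Q 2 -> poly_nonzero Q ->
  (forall y, peval Q y <> 0 -> F y = 0) -> forall y, F y = 0.
Proof.
  intros Hc Hd Hn HF y0.
  destruct (Req_dec (F y0) 0) as [|Hne]; auto. exfalso.
  destruct (cont_nonzero F y0 (Hc y0) Hne) as [d [Hd0 Hz]].
  assert (HQ : forall z, Rabs (z - y0) < d -> peval Q z = 0).
  { intros z Hzy. destruct (Req_dec (peval Q z) 0) as [|HQz]; auto.
    exfalso. apply (Hz z Hzy). apply HF; auto. }
  apply (three_pts Q y0 (d/2) Hd Hn); [lra| apply HQ | apply HQ | apply HQ].
  - rewrite Rminus_diag, Rabs_R0; lra.
  - replace (y0 + d/2 - y0) with (d/2) by ring. rewrite Rabs_right; lra.
  - replace (y0 - d/2 - y0) with (-(d/2)) by ring. rewrite Rabs_Ropp, Rabs_right; lra.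
Qed.

Lemma nocommon a y : peval (Pa a) y = 0 -> peval (Qa a) y = 0 -> False.
Proof.
  rewrite Pv_eq, Qv_eq. unfold pp, bb. intros HP HQ.
  assert (H1 : y * (1 + (a + 1/2) * y) = (1 + (a + 1) * y + (1 / 3 + a / 2) * y ^ 2) - (1 + a * y + (- a / 2 - 1 / 6) * y ^ 2)) by field.
  rewrite HP, HQ, Rminus_0_r in H1.
  apply Rmult_integral in H1. destruct H1 as [H1|H1].
  - subst y. lra.
  - assert (Hmy : y*(a+1/2) = -1) by lra.
    assert (E: (a+1/2)^2 * (1 + a*y + (-a/2-1/6)*y^2) = (a+1/2)^2 + a*(a+1/2)*(y*(a+1/2)) + (-a/2-1/6)*(y*(a+1/2))^2) by ring.
    rewrite Hmy, HQ in E. nra.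
Qed.

Lemma core a (P Q : Defs.poly) r x : deg_le Q 2 -> poly_nonzero Q ->
  (forall y, peval P y * peval (Qa a) y = peval (Pa a) y * peval Q y) ->
  am_on P Q r -> -r <= x <= 0 ->
  peval (Qa a) x <> 0 /\ forall k, 0 <= Dk a k x.
Proof.
  intros Hd Hn Hrel [P0 [Q0 [[U [V HB]] [HQ0nz [HPQ Habs]]]]] Hx.
  assert (Hid : forall y, peval P0 y * peval (Qa a) y - peval (Pa a) y * peval Q0 y = 0).
  { apply (poly_id_everywhere _ Q); auto.
    - intro y. apply continuity_pt_minus; apply continuity_pt_mult; apply peval_cont.
    - intros y HQy. apply (Rmult_eq_reg_l (peval Q y)); auto.
      rewrite Rmult_0_r.
      replace (peval Q y * (peval P0 y * peval (Qa a) y - peval (Pa a) y * peval Q0 y))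
        with (peval (Qa a) y * (peval P0 y * peval Q y - peval P y * peval Q0 y)
              + peval Q0 y * (peval P y * peval (Qa a) y - peval (Pa a) y * peval Q y)) by ring.
      rewrite HPQ, Hrel. ring. }
  assert (HU : forall y, peval Q0 y <> 0 <-> peval (Qa a) y <> 0).
  { intro y. split; intros H1 H2.
    - apply (nocommon a y); auto.
      specialize (Hid y). rewrite H2, Rmult_0_r in Hid.
      apply (Rmult_eq_reg_r (peval Q0 y)); auto. lra.
    - specialize (Hid y). rewrite H2, Rmult_0_r in Hid.
      assert (HP0 : peval P0 y = 0).
      { apply (Rmult_eq_reg_r (peval (Qa a) y)); auto. lra. }
      specialize (HB y). rewrite HP0, H2 in HB. lra. }
  assert (Hf : forall y, peval Q0 y <> 0 -> peval P0 y / peval Q0 y = Dk a 0 y).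
  { intros y Hy. unfold Dk; cbn [Dpair fst].
    assert (Hy' : peval (Qa a) y <> 0) by (apply HU; auto).
    specialize (Hid y).
    replace (peval P0 y) with (peval (Pa a) y * peval Q0 y / peval (Qa a) y)
      by (field_simplify_eq; [lra|auto]).
    field. split; auto. }
  destruct (Habs x Hx) as [HUx Hk].
  split; [apply HU; auto|].
  intro k. destruct (Hk k) as [[g Hg] Hall].
  specialize (Hall g Hg).
  rewrite (nderiv_unique a (fun y => peval Q0 y <> 0) (fun y => peval P0 y / peval Q0 y) HU Hf k g Hg x HUx) in Hall.
  exact Hall.
Qed.

Lemma complex_seq (v : nat -> R) A B : 0 < B -> A*A < 4*B -> 0 < v 0%nat ->
  (forall j, v (S (S j)) = A * v (S j) - B * v j) ->
  (forall j, 0 <= v j) -> False.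
Proof.
  intros HB HAB Hv0 Hrec Hpos.
  set (s := sqrt B).
  assert (Hs : 0 < s) by (apply sqrt_lt_R0; auto).
  assert (Hs2 : s * s = B) by (apply sqrt_sqrt; lra).
  set (dl := 2*s - A).
  assert (Hdl : 0 < dl).
  { unfold dl. destruct (Rle_lt_dec A 0); [lra|]. nra. }
  set (T := v 1%nat / v 0%nat).
  assert (Hclaim : forall n, 0 < v n /\ v (S n) <= (T - INR n * dl) * v n).
  { induction n as [|n [IH1 IH2]].
    - split; auto. simpl. unfold T. right. field. lra.
    - set (t := T - INR n * dl) in *.
      assert (H1 : 0 < v (S n)).
      { destruct (Hpos (S n)) as [H|H]; auto. exfalso.
        specialize (Hrec n). rewrite <- H in Hrec.
        specialize (Hpos (S (S n))). nra. }
      assert (Ht : 0 < t) by nra.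
      split; auto.
      rewrite S_INR. replace (T - (INR n + 1) * dl) with (t - dl) by (unfold t; ring).
      rewrite Hrec.
      assert (Hk : t * ((t - dl) * v (S n) - (A * v (S n) - B * v n)) >= 0).
      { replace (t * ((t - dl) * v (S n) - (A * v (S n) - B * v n)))
          with ((t - s)*(t-s) * v (S n) + s*s * (t * v n - v (S n))) by (unfold dl; rewrite <- Hs2; ring).
        assert (0 <= (t-s)*(t-s) * v (S n)) by (apply Rmult_le_pos; [apply Rle_0_sqr|lra]).
        assert (0 <= s*s * (t * v n - v (S n))) by (apply Rmult_le_pos; nra).
        lra. }
      nra. }
  destruct (INR_archimed dl T Hdl) as [n Hn].
  destruct (Hclaim n) as [H1 H2].
  assert (0 < v (S n)) by (apply (Hclaim (S n))).
  nra.
Qed.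

Lemma Dk_rec a k y : Dk a (S (S k)) y = (Pd a (S (S k)) y - INR (S (S k)) * Qd a y * Dk a (S k) y
   - INR (S (S k)) * INR (S k) * bb a * Dk a k y) / peval (Qa a) y.
Proof. reflexivity. Qed.
Lemma Dk_1 a y : Dk a 1 y = (Pd a 1 y - Qd a y * Dk a 0 y) / peval (Qa a) y.
Proof. reflexivity. Qed.
Lemma Dk_0 a y : Dk a 0 y = peval (Pa a) y / peval (Qa a) y.
Proof. reflexivity. Qed.

Lemma Q0one a : peval (Qa a) 0 = 1.
Proof. rewrite Qv_eq. ring. Qed.

Lemma D0_rec a k : Dk a (S (S (S k))) 0 = - INR (S (S (S k))) * a * Dk a (S (S k)) 0
  - INR (S (S (S k))) * INR (S (S k)) * bb a * Dk a (S k) 0.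
Proof. rewrite Dk_rec, Q0one. unfold Qd; simpl Pd. field. Qed.

Lemma D0_0 a : Dk a 0 0 = 1.
Proof. rewrite Dk_0, Q0one, Pv_eq. field. Qed.
Lemma D0_1 a : Dk a 1 0 = 1.
Proof. rewrite Dk_1, Q0one, D0_0. unfold Qd, Pd. field. Qed.
Lemma D0_2 a : Dk a 2 0 = 1.
Proof. rewrite Dk_rec, Q0one, D0_0, D0_1. unfold Qd, Pd, pp, bb. simpl INR. field. Qed.
Lemma D0_3 a : Dk a 3 0 = 1.
Proof. rewrite D0_rec, D0_1, D0_2. unfold bb. simpl INR. field. Qed.
Lemma D0_4 a : Dk a 4 0 = 2*a + 2.
Proof. rewrite D0_rec, D0_2, D0_3. unfold bb. simpl INR. field. Qed.

Lemma sqrt3_sq : sqrt 3 * sqrt 3 = 3.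
Proof. apply sqrt_sqrt. lra. Qed.
Lemma sqrt3_pos : 1 < sqrt 3.
Proof. rewrite <- sqrt_1. apply sqrt_lt_1; lra. Qed.
Lemma sqrt3_lt2 : sqrt 3 < 2.
Proof. assert (H := sqrt3_sq). assert (H1 := sqrt3_pos). nra. Qed.

Lemma sqrt3_gt : 3/2 < sqrt 3.
Proof. assert (H := sqrt3_sq). assert (H1 := sqrt3_pos). nra. Qed.
Lemma sqrt3_lt : sqrt 3 < 7/4.
Proof. assert (H := sqrt3_sq). assert (H1 := sqrt3_pos). nra. Qed.
Lemma a_star_eq : a_star = -1 + sqrt 3 / 3.
Proof. unfold a_star. assert (H: sqrt 3 <> 0) by (assert (H1 := sqrt3_pos); lra).
  f_equal. field_simplify_eq; auto. replace (sqrt 3 ^ 2) with (sqrt 3 * sqrt 3) by ring. rewrite sqrt3_sq. reflexivity. Qed.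

Lemma neg_at0 a : a < a_star -> exists k, Dk a k 0 < 0.
Proof.
  intros Ha. destruct (Rlt_le_dec a (-1)) as [Hlt|Hge].
  - exists 4%nat. rewrite D0_4. lra.
  - apply NNPP. intro Hno.
    assert (Hall : forall k, 0 <= Dk a k 0).
    { intro k. apply Rnot_lt_le. intro H. apply Hno. exists k. auto. }
    set (v := fun j => Dk a (S j) 0 / INR (Factorial.fact (S j))).
    apply (complex_seq v (-a) (bb a)).
    + rewrite a_star_eq in Ha. unfold bb. assert (H := sqrt3_lt). lra.
    + rewrite a_star_eq in Ha. unfold bb.
      assert (Hs := sqrt3_sq). assert (Hs1 := sqrt3_pos).
      assert (Hq2 : 0 <= a + 1 < sqrt 3 / 3) by lra.
      nra.
    + unfold v. rewrite D0_1. simpl. lra.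
    + intro j. unfold v.
      rewrite D0_rec.
      replace (Factorial.fact (S (S (S j)))) with (S (S (S j)) * (S (S j) * Factorial.fact (S j)))%nat by reflexivity.
      rewrite !mult_INR.
      assert (INR (Factorial.fact (S j)) <> 0) by apply INR_fact_neq_0.
      replace (Factorial.fact (S (S j))) with (S (S j) * Factorial.fact (S j))%nat by reflexivity.
      rewrite !mult_INR.
      field. repeat split; auto; apply not_0_INR; lia.
    + intro j. unfold v. apply Rmult_le_pos; [apply Hall|].
      left. apply Rinv_0_lt_compat. apply INR_fact_lt_0.
Qed.

Lemma cont_of_dl f y l : derivable_pt_lim f y l -> continuity_pt f y.
Proof. intro H. apply derivable_continuous_pt. exists l. exact H. Qed.

Lemma cont_neg (f : R -> R) y : continuity_pt f y -> f y < 0 ->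
  exists d, 0 < d /\ forall z, Rabs (z - y) < d -> f z < 0.
Proof.
  intros Hc Hy.
  assert (He : 0 < - f y / 2) by lra.
  destruct (Hc _ He) as [d [Hd H]].
  exists d. split; auto. intros z Hz.
  destruct (Req_dec z y) as [->|Hne]; [auto|].
  assert (Hdist : dist R_met z y < d) by (simpl; unfold R_dist; auto).
  specialize (H z (conj (conj I (not_eq_sym Hne)) Hdist)). simpl in H; unfold R_dist in H.
  apply Rabs_lt_between in H. lra.
Qed.

Definition Nf a x := Pd a 1 x * peval (Qa a) x - Qd a x * peval (Pa a) x.

Lemma Nf_eq a x : Nf a x = 1 + (1+2*a)*x + (a*a+a+1/6)*x^2.
Proof. unfold Nf. rewrite Pv_eq, Qv_eq. unfold Pd, Qd, pp, bb. field. Qed.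

Lemma D1_Nf a x : peval (Qa a) x <> 0 -> Dk a 1 x = Nf a x / (peval (Qa a) x * peval (Qa a) x).
Proof. intro H. rewrite Dk_1, Dk_0. unfold Nf. field. auto. Qed.

Lemma Nf_cont a x : continuity_pt (Nf a) x.
Proof.
  apply (cont_of_dl _ _ (Pd a 2 x * peval (Qa a) x + Pd a 1 x * Qd a x
          - (2 * bb a * peval (Pa a) x + Qd a x * Pd a 1 x))).
  unfold Nf. apply dl_minus; apply dl_mult.
  - apply dPd.
  - apply dQ.
  - apply dQd.
  - apply (dPd a 0).
Qed.

Lemma fail_mid a : a_star < a <= 0 ->
  exists x0, -(1 + sqrt 3) < x0 <= 0 /\ (peval (Qa a) x0 = 0 \/ exists k, Dk a k x0 < 0).
Proof.
  intros Ha. rewrite a_star_eq in Ha.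
  assert (Hs := sqrt3_sq). assert (Hs1 := sqrt3_gt). assert (Hs2 := sqrt3_lt).
  set (s := sqrt 3) in *.
  assert (HN : Nf a (-(1+s)) < 0).
  { rewrite Nf_eq.
    replace (1 + (1 + 2 * a) * - (1 + s) + (a * a + a + 1 / 6) * (- (1 + s)) ^ 2)
      with ((4+2*s)*(a - (-1 + s/3))*(a - (2*s-3)/3)) by (field_simplify; nra).
    assert (0 < 4 + 2*s) by lra. assert (0 < a - (-1 + s/3)) by lra. assert (a - (2*s-3)/3 < 0) by lra.
    assert (0 < (4+2*s)*(a - (-1 + s/3))) by (apply Rmult_lt_0_compat; lra).
    nra. }
  destruct (cont_neg (Nf a) (-(1+s)) (Nf_cont a _) HN) as [d [Hd Hz]].
  set (x0 := -(1+s) + Rmin (d/2) 1).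
  assert (Hm1 : 0 < Rmin (d/2) 1) by (apply Rmin_pos; lra).
  assert (Hm2 : Rmin (d/2) 1 <= d/2) by apply Rmin_l.
  assert (Hm3 : Rmin (d/2) 1 <= 1) by apply Rmin_r.
  exists x0. split; [unfold x0; lra|].
  destruct (Req_dec (peval (Qa a) x0) 0) as [H0|H0]; [left; auto|right].
  exists 1%nat. rewrite D1_Nf by auto.
  assert (HNx : Nf a x0 < 0).
  { apply Hz. unfold x0. replace (-(1+s) + Rmin (d/2) 1 - -(1+s)) with (Rmin (d/2) 1) by ring.
    rewrite Rabs_right; lra. }
  assert (0 < peval (Qa a) x0 * peval (Qa a) x0) by (apply Rsqr_pos_lt; auto).
  apply Rmult_lt_reg_r with (peval (Qa a) x0 * peval (Qa a) x0); auto.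
  field_simplify; try lra; auto.
Qed.

Lemma peval_continuity (p : Defs.poly) : continuity (peval p).
Proof. intro y. apply peval_cont. Qed.

Lemma fail_big a : 0 < a ->
  exists x0, -(1 + sqrt 3) < x0 <= 0 /\ (peval (Qa a) x0 = 0 \/ exists k, Dk a k x0 < 0).
Proof.
  intros Ha.
  assert (Hs := sqrt3_sq). assert (Hs1 := sqrt3_gt). assert (Hs2 := sqrt3_lt).
  assert (HQ : peval (Qa a) (-(1+sqrt 3)) < 0).
  { rewrite Qv_eq. unfold bb. set (s := sqrt 3) in *.
    replace (1 + a * - (1 + s) + (- a / 2 - 1 / 6) * (- (1 + s)) ^ 2)
      with (1/3 - s/3 - a*(3+2*s)) by (field_simplify; nra).
    nra. }
  assert (H0 : 0 < peval (Qa a) 0) by (rewrite Q0one; lra).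
  destruct (IVT (peval (Qa a)) (-(1+sqrt 3)) 0 (peval_continuity _) ltac:(lra) HQ H0) as [z [Hz1 Hz2]].
  exists z. split; [|left; auto].
  split; [|lra]. destruct Hz1 as [[Hlt|Heq] _]; auto. subst z. lra.
Qed.

Definition Ec (c be ga t : R) (k : nat) :=
  INR (Factorial.fact k) * c^k * (be / t^(S k) + INR (S k) * ga / t^(S (S k))).

Lemma Ec_rec c be ga t k : t <> 0 ->
  Ec c be ga t (S (S k)) =
   (0 - INR (S (S k)) * (-2*c*t) * Ec c be ga t (S k) - INR (S (S k)) * INR (S k) * (c*c) * Ec c be ga t k) / (t*t).
Proof.
  intros Ht. unfold Ec.
  replace (Factorial.fact (S (S k))) with (S (S k) * (S k * Factorial.fact k))%nat by reflexivity.
  replace (Factorial.fact (S k)) with (S k * Factorial.fact k)%nat by reflexivity.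
  rewrite !mult_INR. rewrite !S_INR. simpl pow. field.
  repeat split; auto; apply pow_nonzero; auto.
Qed.

Lemma s_pow (s : R) n : s*s = 3 -> s^(S (S n)) = 3 * s^n.
Proof. intro H. simpl. rewrite <- H. ring. Qed.
Ltac red3 Hs := repeat (rewrite (s_pow _ _ Hs)); simpl pow; ring.

Definition cst := (3 - sqrt 3)/6.
Definition alst := 1 + sqrt 3.
Definition best := -3 * (1 + sqrt 3).
Definition gast := 3 + 2 * sqrt 3.

Lemma astar_Q x : peval (Qa a_star) x = (1 - cst*x)*(1 - cst*x).
Proof. rewrite Qv_eq, a_star_eq. unfold bb, cst. assert (Hs := sqrt3_sq).
  set (s := sqrt 3) in *. clearbody s. field_simplify_eq. red3 Hs. Qed.
Lemma astar_Qd x : Qd a_star x = -2*cst*(1 - cst*x).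
Proof. unfold Qd. rewrite a_star_eq. unfold bb, cst. assert (Hs := sqrt3_sq).
  set (s := sqrt 3) in *. clearbody s. field_simplify_eq. red3 Hs. Qed.
Lemma astar_bb : bb a_star = cst*cst.
Proof. rewrite a_star_eq. unfold bb, cst. assert (Hs := sqrt3_sq).
  set (s := sqrt 3) in *. clearbody s. field_simplify_eq. red3 Hs. Qed.
Lemma astar_pp : pp a_star = cst*cst*alst.
Proof. rewrite a_star_eq. unfold pp, cst, alst. assert (Hs := sqrt3_sq).
  set (s := sqrt 3) in *. clearbody s. field_simplify_eq. red3 Hs. Qed.
Lemma astar_P x : peval (Pa a_star) x = alst*(1 - cst*x)*(1 - cst*x) + best*(1-cst*x) + gast.
Proof. rewrite Pv_eq, a_star_eq. unfold pp, cst, alst, best, gast. assert (Hs := sqrt3_sq).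
  set (s := sqrt 3) in *. clearbody s. field_simplify_eq. red3 Hs. Qed.
Lemma astar_N x : Nf a_star x = cst * (best * (1-cst*x)*(1-cst*x) + 2*gast*(1-cst*x)).
Proof. rewrite Nf_eq, a_star_eq. unfold cst, best, gast. assert (Hs := sqrt3_sq).
  set (s := sqrt 3) in *. clearbody s. field_simplify_eq. red3 Hs. Qed.

Lemma cst_pos : 0 < cst.
Proof. unfold cst. assert (H := sqrt3_lt). lra. Qed.

Lemma astar_D x k : (1 - cst*x) <> 0 ->
  Dk a_star (S k) x = Ec cst best gast (1 - cst*x) (S k) /\
  Dk a_star (S (S k)) x = Ec cst best gast (1 - cst*x) (S (S k)).
Proof.
  intros Ht. set (t := 1 - cst*x) in *.
  assert (HQ : peval (Qa a_star) x <> 0) by (rewrite astar_Q; fold t; apply Rmult_integral_contrapositive; auto).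
  assert (H1 : Dk a_star 1 x = Ec cst best gast t 1).
  { rewrite D1_Nf by auto. rewrite astar_N, astar_Q. fold t. unfold Ec. simpl. field. auto. }
  induction k as [|k [IH1 IH2]].
  - split; auto.
    rewrite Dk_rec, H1, Ec_rec by auto. rewrite Dk_0, astar_P, astar_Q, astar_Qd, astar_bb. fold t.
    cbn [Pd]. rewrite astar_pp. unfold Ec. simpl. field. auto.
  - split; auto.
    rewrite Dk_rec, IH1, IH2, (Ec_rec _ _ _ _ (S k)) by auto.
    rewrite astar_Q, astar_Qd, astar_bb. fold t. cbn [Pd]. reflexivity.
Qed.

Lemma astar_r3 : 1 + cst * (1 + sqrt 3) = 1 + sqrt 3 / 3.
Proof. unfold cst. assert (Hs := sqrt3_sq). set (s := sqrt 3) in *. clearbody s.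
  field_simplify_eq. red3 Hs. Qed.

Lemma astar_nonneg x k : -(1 + sqrt 3) <= x <= 0 -> 0 <= Dk a_star k x.
Proof.
  intros Hx. assert (Hc := cst_pos). assert (Hs1 := sqrt3_gt). assert (Hs2 := sqrt3_lt).
  assert (Htt : 1 <= 1 - cst*x) by nra.
  assert (Ht2 : 1 - cst*x <= 1 + sqrt 3 / 3).
  { rewrite <- astar_r3. nra. }
  set (t := 1 - cst*x) in *.
  assert (Ht : t <> 0) by lra.
  destruct k as [|k].
  - rewrite Dk_0. apply Rmult_le_pos.
    + rewrite Pv_eq, a_star_eq. unfold pp. assert (Hs := sqrt3_sq). set (s := sqrt 3) in *.
      nra.
    + left. apply Rinv_0_lt_compat. rewrite astar_Q. fold t. nra.
  - rewrite (proj1 (astar_D x k Ht)). fold t. unfold Ec.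
    apply Rmult_le_pos.
    + apply Rmult_le_pos; [apply pos_INR| apply pow_le; lra].
    + assert (Hp : 0 < t^(S (S (S k)))) by (apply pow_lt; lra).
      replace (best / t ^ S (S k) + INR (S (S k)) * gast / t ^ S (S (S k)))
        with ((best * t + INR (S (S k)) * gast) / t ^ S (S (S k))) by (simpl; field; split; [apply pow_nonzero|]; auto).
      apply Rmult_le_pos; [|left; apply Rinv_0_lt_compat; auto].
      assert (H2 : 2 <= INR (S (S k))) by (rewrite !S_INR; assert (H := pos_INR k); lra).
      unfold best, gast.
      assert (0 <= (INR (S (S k)) - 2) * (3 + 2 * sqrt 3)) by (apply Rmult_le_pos; lra).
      assert (Hs := sqrt3_sq).
      nra.
Qed.

Lemma astar_neg x : x < -(1 + sqrt 3) -> Dk a_star 1 x < 0.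
Proof.
  intros Hx. assert (Hc := cst_pos). assert (Hs1 := sqrt3_gt). assert (Hs2 := sqrt3_lt).
  assert (Ht2 : 1 + sqrt 3 / 3 < 1 - cst*x).
  { rewrite <- astar_r3. nra. }
  set (t := 1 - cst*x) in *.
  assert (Ht : t <> 0) by lra.
  rewrite (proj1 (astar_D x 0 Ht)). fold t.
  assert (Hp : 0 < t*t*t) by (apply Rmult_lt_0_compat; [apply Rmult_lt_0_compat|]; lra).
  assert (E : Ec cst best gast t 1 = cst * (best * t + 2 * gast) / (t*t*t)) by (unfold Ec; simpl; field; auto).
  rewrite E.
  apply Rmult_lt_reg_r with (t*t*t); auto. rewrite Rmult_0_l.
  field_simplify; [|lra].
  unfold best, gast. assert (Hs := sqrt3_sq).
  assert (0 < cst * ((1 + sqrt 3) * (t - (1 + sqrt 3/3)))) by (apply Rmult_lt_0_compat; [|apply Rmult_lt_0_compat]; lra).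
  nra.
Qed.

Lemma abs_from_D a x : peval (Qa a) x <> 0 -> (forall k, 0 <= Dk a k x) ->
  abs_mono_at (Pa a) (Qa a) x.
Proof.
  intros HQ HD. unfold abs_mono_at. split; auto.
  intro k. split.
  - exists (Dk a k). apply nderiv_D.
  - intros g Hg.
    rewrite (nderiv_unique a (fun y => peval (Qa a) y <> 0) (fun y => peval (Pa a) y / peval (Qa a) y)
      ltac:(intro; tauto) ltac:(intros; reflexivity) k g Hg x HQ).
    auto.
Qed.

Lemma astar_coprime : coprime_poly (Pa a_star) (Qa a_star).
Proof.
  exists [-6 + 11/3 * sqrt 3; 4 - 7/3 * sqrt 3], [7 - 11/3 * sqrt 3; 3 - 5/3 * sqrt 3].
  intro x. unfold Pa, Qa. rewrite a_star_eq. simpl.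
  assert (Hs := sqrt3_sq). set (s := sqrt 3) in *. clearbody s.
  field_simplify_eq. red3 Hs.
Qed.

Lemma Qa_nonzero a : poly_nonzero (Qa a).
Proof. exists 0%nat. simpl. lra. Qed.
Lemma Qa_deg a : deg_le (Qa a) 2.
Proof. unfold deg_le, Qa. simpl. lia. Qed.
Lemma Pa_deg a : deg_le (Pa a) 2.
Proof. unfold deg_le, Pa. simpl. lia. Qed.

Lemma astar_am r : r <= 1 + sqrt 3 -> am_on (Pa a_star) (Qa a_star) r.
Proof.
  intros Hr. exists (Pa a_star), (Qa a_star).
  split; [apply astar_coprime|]. split; [apply Qa_nonzero|]. split; [intros; ring|].
  intros x Hx. apply abs_from_D.
  - rewrite astar_Q. assert (Hc := cst_pos).
    assert (0 < 1 - cst*x) by nra. apply Rmult_integral_contrapositive; lra.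
  - intro k. apply astar_nonneg. lra.
Qed.

Lemma astar_lub : is_lub (R_set (Pa a_star) (Qa a_star)) (1 + sqrt 3).
Proof.
  assert (Hs1 := sqrt3_gt). split.
  - intros r [Hr|[Hr Ham]]; [lra|].
    destruct (Rle_lt_dec r (1 + sqrt 3)) as [|Hlt]; auto. exfalso.
    destruct (core a_star (Pa a_star) (Qa a_star) r (-r) (Qa_deg _) (Qa_nonzero _)
               ltac:(intros; ring) Ham ltac:(lra)) as [_ HD].
    specialize (HD 1%nat). assert (H := astar_neg (-r) ltac:(lra)). lra.
  - intros b Hb. apply Hb. right. split; [lra|]. apply astar_am. lra.
Qed.

Lemma fail_pt a : a <> a_star ->
  exists x0, -(1 + sqrt 3) < x0 <= 0 /\ (peval (Qa a) x0 = 0 \/ exists k, Dk a k x0 < 0).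
Proof.
  intros Ha. destruct (Rtotal_order a a_star) as [Hlt|[Heq|Hgt]].
  - exists 0. split; [assert (H := sqrt3_gt); lra|]. right. apply neg_at0; auto.
  - contradiction.
  - destruct (Rle_lt_dec a 0).
    + apply fail_mid. lra.
    + apply fail_big. lra.
Qed.

Lemma upper_gen a (P Q : Defs.poly) r : a <> a_star -> deg_le Q 2 -> poly_nonzero Q ->
  (forall y, peval P y * peval (Qa a) y = peval (Pa a) y * peval Q y) ->
  forall x0, -(1 + sqrt 3) < x0 <= 0 -> (peval (Qa a) x0 = 0 \/ exists k, Dk a k x0 < 0) ->
  am_on P Q r -> r <= - x0.
Proof.
  intros Ha Hd Hn Hrel x0 Hx0 Hf Ham.
  destruct (Rle_lt_dec r (-x0)) as [|Hlt]; auto. exfalso.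
  destruct (core a P Q r x0 Hd Hn Hrel Ham ltac:(lra)) as [HQ HD].
  destruct Hf as [Hf|[k Hk]]; [contradiction|]. specialize (HD k). lra.
Qed.

Lemma other_bound a : a <> a_star ->
  exists s, s < 1 + sqrt 3 /\ is_upper_bound (R_set (Pa a) (Qa a)) s.
Proof.
  intros Ha. destruct (fail_pt a Ha) as [x0 [Hx0 Hf]].
  exists (-x0). split; [lra|].
  intros r [Hr|[Hr Ham]]; [lra|].
  apply (upper_gen a (Pa a) (Qa a) r Ha (Qa_deg _) (Qa_nonzero _) ltac:(intros; ring) x0 Hx0 Hf Ham).
Qed.

Lemma mvt_bound (f f' : R -> R) M m :
  0 <= M -> f 0 = 0 -> (forall t, derivable_pt_lim f t (f' t)) ->
  (forall t, Rabs t <= 1 -> Rabs (f' t) <= M * Rabs t ^ m) ->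
  forall z, Rabs z <= 1 -> Rabs (f z) <= M * Rabs z ^ (S m).
Proof.
  intros HM Hf0 Hd Hb z Hz.
  destruct (Rtotal_order z 0) as [Hlt|[Heq|Hgt]].
  - destruct (MVT_cor2 f f' z 0 Hlt (fun c _ => Hd c)) as [c [Hc1 Hc2]].
    rewrite Hf0 in Hc1.
    replace (f z) with (- (f' c * (0 - z))) by lra.
    rewrite Rabs_Ropp, Rabs_mult.
    assert (Hcz : Rabs c <= Rabs z) by (rewrite !Rabs_left; lra).
    assert (Hc1' : Rabs c <= 1) by lra.
    specialize (Hb c Hc1').
    replace (Rabs (0 - z)) with (Rabs z) by (rewrite Rminus_0_l, Rabs_Ropp; auto).
    simpl. 
    assert (Rabs c ^ m <= Rabs z ^ m) by (apply pow_incr; split; [apply Rabs_pos|auto]).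
    assert (0 <= Rabs z) by apply Rabs_pos.
    assert (M * Rabs c ^ m <= M * Rabs z ^ m) by (apply Rmult_le_compat_l; auto).
    assert (0 <= Rabs (f' c)) by apply Rabs_pos.
    nra.
  - subst z. rewrite Hf0, Rabs_R0. simpl. nra.
  - destruct (MVT_cor2 f f' 0 z Hgt (fun c _ => Hd c)) as [c [Hc1 Hc2]].
    rewrite Hf0 in Hc1.
    replace (f z) with (f' c * (z - 0)) by lra.
    rewrite Rabs_mult.
    assert (Hcz : Rabs c <= Rabs z) by (rewrite !Rabs_right; lra).
    assert (Hc1' : Rabs c <= 1) by lra.
    specialize (Hb c Hc1').
    replace (Rabs (z - 0)) with (Rabs z) by (rewrite Rminus_0_r; auto).
    simpl.
    assert (Rabs c ^ m <= Rabs z ^ m) by (apply pow_incr; split; [apply Rabs_pos|auto]).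
    assert (0 <= Rabs z) by apply Rabs_pos.
    assert (M * Rabs c ^ m <= M * Rabs z ^ m) by (apply Rmult_le_compat_l; auto).
    assert (0 <= Rabs (f' c)) by apply Rabs_pos.
    nra.
Qed.

Definition T3 z := 1 + z + z^2/2 + z^3/6.

Lemma exp_T3 z : Rabs z <= 1 -> Rabs (exp z - T3 z) <= 3 * Rabs z ^ 4.
Proof.
  intros Hz.
  assert (H3 : forall t, Rabs t <= 1 -> Rabs (exp t - 1) <= 3 * Rabs t ^ 1).
  { apply (mvt_bound (fun t => exp t - 1) (fun t => exp t) 3 0); [lra| rewrite exp_0; ring | |].
    - intro t. apply is_derive_Reals. auto_derive; auto. ring.
    - intros t Ht. simpl. rewrite Rabs_right by (left; apply exp_pos).
      apply Rabs_le_between in Ht.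
      assert (exp t <= exp 1) by (destruct (Req_dec t 1) as [->|Hne]; [lra| left; apply exp_increasing; lra]).
      assert (He3 := exp_le_3). lra. }
  assert (H2 : forall t, Rabs t <= 1 -> Rabs (exp t - (1 + t)) <= 3 * Rabs t ^ 2).
  { apply (mvt_bound (fun t => exp t - (1 + t)) (fun t => exp t - 1) 3 1); [lra| rewrite exp_0; ring | |auto].
    intro t. apply is_derive_Reals. auto_derive; auto. ring. }
  assert (H1 : forall t, Rabs t <= 1 -> Rabs (exp t - (1 + t + t^2/2)) <= 3 * Rabs t ^ 3).
  { apply (mvt_bound (fun t => exp t - (1 + t + t^2/2)) (fun t => exp t - (1 + t)) 3 2); [lra| rewrite exp_0; field | |auto].
    intro t. apply is_derive_Reals. auto_derive; auto. field. }
  apply (mvt_bound (fun t => exp t - T3 t) (fun t => exp t - (1 + t + t^2/2)) 3 3); [lra| unfold T3; rewrite exp_0; field | |auto|auto].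
  intro t. unfold T3. apply is_derive_Reals. auto_derive; auto. field.
Qed.

Lemma PQT3 a z : peval (Pa a) z - peval (Qa a) z * T3 z = - z^4 * (a/6 + bb a/2 + bb a * z/6).
Proof. rewrite Pv_eq, Qv_eq. unfold T3, bb, pp. field. Qed.

Lemma Pa_in_Pi a : in_Pi 2 2 3 (Pa a) (Qa a).
Proof.
  split; [apply Pa_deg|]. split; [apply Qa_deg|]. split; [apply Qa_nonzero|].
  set (K := Rabs a + Rabs (bb a)).
  assert (HK : 0 <= K) by (unfold K; assert (H1 := Rabs_pos a); assert (H2 := Rabs_pos (bb a)); lra).
  exists (2*K + 3), (Rmin 1 (1/(2*(K+1)))).
  split; [apply Rmin_pos; [lra| apply Rdiv_lt_0_compat; lra]|].
  intros z Hz HQz.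
  assert (Hz1 : Rabs z <= 1) by (left; apply Rlt_le_trans with (1:=Hz); apply Rmin_l).
  assert (Hz2 : Rabs z * (K+1) <= 1/2).
  { assert (Rabs z <= 1/(2*(K+1))) by (left; apply Rlt_le_trans with (1:=Hz); apply Rmin_r).
    apply Rmult_le_reg_r with (/(K+1)); [apply Rinv_0_lt_compat; lra|].
    replace (Rabs z * (K + 1) * / (K + 1)) with (Rabs z) by (field; lra).
    replace (1/2 * / (K+1)) with (1/(2*(K+1))) by (field; lra). auto. }
  assert (Hza : 0 <= Rabs z) by apply Rabs_pos.
  assert (HQ : 1/2 <= Rabs (peval (Qa a) z)).
  { rewrite Qv_eq.
    assert (Hs : Rabs (a*z + bb a * z^2) <= K * Rabs z).
    { eapply Rle_trans; [apply Rabs_triang|]. rewrite !Rabs_mult, <- RPow_abs.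
      unfold K. simpl. rewrite Rmult_1_r.
      assert (Rabs (bb a) * (Rabs z * Rabs z) <= Rabs (bb a) * Rabs z)
        by (apply Rmult_le_compat_l; [apply Rabs_pos| nra]). lra. }
    assert (Hr : Rabs 1 - Rabs (a * z + bb a * z ^ 2) <= Rabs (1 + a * z + bb a * z ^ 2)).
    { replace (1 + a * z + bb a * z ^ 2) with (1 - - (a * z + bb a * z ^ 2)) by ring.
      rewrite <- (Rabs_Ropp (a * z + bb a * z ^ 2)) at 1. apply Rabs_triang_inv. }
    rewrite Rabs_R1 in Hr. nra. }
  replace (peval (Pa a) z / peval (Qa a) z - exp z)
    with ((peval (Pa a) z - peval (Qa a) z * T3 z) / peval (Qa a) z - (exp z - T3 z)) by (field; auto).
  eapply Rle_trans; [apply Rabs_triang|]. rewrite Rabs_Ropp.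
  assert (HE := exp_T3 z Hz1).
  rewrite PQT3. unfold Rdiv. rewrite Rabs_mult, Rabs_mult, Rabs_Ropp, <- RPow_abs, Rabs_inv.
  assert (Hw : Rabs (a / 6 + bb a / 2 + bb a * z / 6) <= K).
  { assert (Hbz : Rabs (bb a * z) <= Rabs (bb a)) by (rewrite Rabs_mult; assert (H := Rabs_pos (bb a)); nra).
    apply Rabs_le. unfold K.
    assert (h1 := Rle_abs a). assert (h2 := Rle_abs (-a)). rewrite Rabs_Ropp in h2.
    assert (h3 := Rle_abs (bb a)). assert (h4 := Rle_abs (-bb a)). rewrite Rabs_Ropp in h4.
    assert (h5 := Rle_abs (bb a * z)). assert (h6 := Rle_abs (-(bb a * z))). rewrite Rabs_Ropp in h6.
    split; lra. }
  assert (Hinv : / Rabs (peval (Qa a) z) <= 2).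
  { replace 2 with (/ (1/2)) by field. apply Rinv_le_contravar; lra. }
  assert (Hp4 : 0 <= Rabs z ^ 4) by (apply pow_le; auto).
  simpl (3+1)%nat.
  assert (Hw0 : 0 <= Rabs (a / 6 + bb a / 2 + bb a * z / 6)) by apply Rabs_pos.
  assert (Hi0 : 0 <= / Rabs (peval (Qa a) z)) by (left; apply Rinv_0_lt_compat; lra).
  assert (Rabs z ^ 4 * Rabs (a / 6 + bb a / 2 + bb a * z / 6) <= Rabs z ^ 4 * K) by (apply Rmult_le_compat_l; auto).
  assert (Rabs z ^ 4 * Rabs (a / 6 + bb a / 2 + bb a * z / 6) * / Rabs (peval (Qa a) z) <= Rabs z ^ 4 * K * 2).
  { apply Rmult_le_compat; auto. apply Rmult_le_pos; auto. }
  nra.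
Qed.

Fixpoint sum_abs (l : Defs.poly) : R := match l with [] => 0 | c :: q => Rabs c + sum_abs q end.

Lemma sum_abs_pos l : 0 <= sum_abs l.
Proof. induction l; simpl; [lra|]. assert (H := Rabs_pos a). lra. Qed.

Lemma peval_bound l z : Rabs z <= 1 -> Rabs (peval l z) <= sum_abs l.
Proof.
  intros Hz. induction l as [|c q IH]; simpl.
  - rewrite Rabs_R0; lra.
  - eapply Rle_trans; [apply Rabs_triang|]. rewrite Rabs_mult.
    assert (0 <= Rabs (peval q z)) by apply Rabs_pos.
    assert (Rabs z * Rabs (peval q z) <= 1 * sum_abs q) by (apply Rmult_le_compat; auto; apply Rabs_pos).
    lra.
Qed.

Lemma coef_zero (c : R) (E : R -> R) K m d M : 0 < d ->
  (forall z, 0 < z < d -> Rabs (E z) <= M) ->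
  (forall z, 0 < z < d -> Rabs (c + z * E z) <= K * z^(S m)) -> c = 0.
Proof.
  intros Hd HE Hb. apply NNPP. intro Hc.
  assert (Hca : 0 < Rabs c) by (apply Rabs_pos_lt; auto).
  set (L := Rabs K + Rabs M + 1).
  assert (HL : 1 <= L) by (unfold L; assert (H1 := Rabs_pos K); assert (H2 := Rabs_pos M); lra).
  set (z := Rmin (Rmin (d/2) (1/2)) (Rabs c / (2*L))).
  assert (Hz0 : 0 < z) by (unfold z; repeat apply Rmin_pos; try lra; apply Rdiv_lt_0_compat; lra).
  assert (Hz1 : z <= d/2) by (unfold z; eapply Rle_trans; [apply Rmin_l| apply Rmin_l]).
  assert (Hz2 : z <= 1/2) by (unfold z; eapply Rle_trans; [apply Rmin_l| apply Rmin_r]).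
  assert (Hz3 : z <= Rabs c / (2*L)) by (unfold z; apply Rmin_r).
  assert (Hzd : 0 < z < d) by lra.
  specialize (HE z Hzd). specialize (Hb z Hzd).
  assert (Hpow : z ^ S m <= z).
  { change (z^(S m)) with (z * z^m). apply Rle_trans with (z * 1); [|lra]. apply Rmult_le_compat_l; [lra|].
    rewrite <- (pow1 m). apply pow_incr. lra. }
  assert (HKz : Rabs (K * z ^ S m) <= Rabs K * z).
  { rewrite Rabs_mult. rewrite (Rabs_right (z ^ S m)) by (left; apply pow_lt; lra).
    apply Rmult_le_compat_l; [apply Rabs_pos|auto]. }
  assert (Hc1 : Rabs c <= Rabs (c + z * E z) + z * Rabs (E z)).
  { replace c with ((c + z * E z) + - (z * E z)) at 1 by ring.
    eapply Rle_trans; [apply Rabs_triang|]. rewrite Rabs_Ropp, Rabs_mult, (Rabs_right z) by lra. lra. }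
  assert (Hk : K * z ^ S m <= Rabs K * z) by (eapply Rle_trans; [apply Rle_abs|exact HKz]).
  assert (Hm : z * Rabs (E z) <= z * Rabs M).
  { apply Rmult_le_compat_l; [lra|]. eapply Rle_trans; [exact HE|apply Rle_abs]. }
  assert (HzL : z * L <= Rabs c / 2).
  { apply Rmult_le_reg_r with (/L); [apply Rinv_0_lt_compat; lra|].
    replace (z * L * / L) with z by (field; lra).
    replace (Rabs c / 2 * / L) with (Rabs c / (2*L)) by (field; lra). auto. }
  unfold L in HzL. lra.
Qed.

Lemma coef_list (m : nat) : forall (l : Defs.poly) K d, 0 < d ->
  (forall z, 0 < z < d -> Rabs (peval l z) <= K * z^m) ->
  forall i, (i < m)%nat -> nth i l 0 = 0.
Proof.
  induction m as [|m IH]; intros l K d Hd Hb i Hi; [lia|].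
  destruct l as [|c q]; [destruct i; reflexivity|].
  assert (Hd1 : 0 < Rmin d 1) by (apply Rmin_pos; lra).
  assert (Hc : c = 0).
  { apply (coef_zero c (peval q) K m (Rmin d 1) (sum_abs q) Hd1).
    - intros z Hz. apply peval_bound. rewrite Rabs_right by lra.
      assert (Rmin d 1 <= 1) by apply Rmin_r. lra.
    - intros z Hz. apply Hb. assert (Rmin d 1 <= d) by apply Rmin_l. lra. }
  destruct i as [|i]; [simpl; auto|].
  simpl. apply (IH q K d Hd); [|lia].
  intros z Hz. specialize (Hb z Hz). change (peval (c :: q) z) with (c + z * peval q z) in Hb.
  change (z^(S m)) with (z * z^m) in Hb. rewrite Hc, Rplus_0_l, Rabs_mult in Hb.
  rewrite (Rabs_right z) in Hb by lra.
  apply Rmult_le_reg_l with z; [lra|]. lra.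
Qed.

Lemma small_nonzero (Q : Defs.poly) : deg_le Q 2 -> poly_nonzero Q ->
  exists d, 0 < d /\ forall z, 0 < z < d -> peval Q z <> 0.
Proof.
  intros Hd Hn. assert (HR := quad_repr Q Hd). assert (HN := quad_nonzero Q Hd Hn).
  set (q0 := nth 0 Q 0) in *. set (q1 := nth 1 Q 0) in *. set (q2 := nth 2 Q 0) in *.
  destruct (Req_dec q0 0) as [H0|H0].
  - destruct (Req_dec q1 0) as [H1|H1].
    + assert (H2 : q2 <> 0) by tauto.
      exists 1. split; [lra|]. intros z Hz. rewrite HR, H0, H1.
      replace (0 + 0 * z + q2 * z ^ 2) with (q2 * (z * z)) by ring.
      apply Rmult_integral_contrapositive; split; auto. apply Rmult_integral_contrapositive; split; lra.
    + exists (Rabs q1 / (Rabs q2 + 1)). split.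
      { apply Rdiv_lt_0_compat; [apply Rabs_pos_lt; auto| assert (H := Rabs_pos q2); lra]. }
      intros z Hz. rewrite HR, H0.
      replace (0 + q1 * z + q2 * z ^ 2) with (z * (q1 + q2 * z)) by ring.
      apply Rmult_integral_contrapositive; split; [lra|].
      intro Hq. assert (Hq' : q1 = - (q2 * z)) by lra.
      assert (Habs : Rabs q1 = Rabs q2 * z) by (rewrite Hq', Rabs_Ropp, Rabs_mult, (Rabs_right z); lra).
      assert (Hz2 : z * (Rabs q2 + 1) < Rabs q1).
      { destruct Hz as [_ Hz]. apply Rmult_lt_reg_r with (/(Rabs q2 + 1)).
        { apply Rinv_0_lt_compat. assert (H := Rabs_pos q2). lra. }
        replace (z * (Rabs q2 + 1) * / (Rabs q2 + 1)) with z by (field; assert (H := Rabs_pos q2); lra).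
        exact Hz. }
      lra.
  - destruct (cont_nonzero (peval Q) 0 (peval_cont Q 0)) as [d [Hd0 Hz]].
    { rewrite HR. replace (q0 + q1 * 0 + q2 * 0 ^ 2) with q0 by ring. auto. }
    exists d. split; auto. intros z Hz'. apply Hz. rewrite Rminus_0_r, Rabs_right; lra.
Qed.

Lemma classify (P Q : Defs.poly) : in_Pi 2 2 3 P Q ->
  exists a, forall x, peval P x * peval (Qa a) x = peval (Pa a) x * peval Q x.
Proof.
  intros [HdP [HdQ [Hn [C [d [Hd Hb]]]]]].
  assert (RP := quad_repr P HdP). assert (RQ := quad_repr Q HdQ). assert (HN := quad_nonzero Q HdQ Hn).
  set (p0 := nth 0 P 0) in *. set (p1 := nth 1 P 0) in *. set (p2 := nth 2 P 0) in *.
  set (q0 := nth 0 Q 0) in *. set (q1 := nth 1 Q 0) in *. set (q2 := nth 2 Q 0) in *.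
  set (Dl := [p0 - q0; p1 - q1 - q0; p2 - q2 - q1 - q0/2; -(q2 + q1/2 + q0/6); -(q1/6 + q2/2); -q2/6]).
  assert (HD : forall z, peval Dl z = peval P z - peval Q z * T3 z).
  { intro z. rewrite RP, RQ. unfold Dl, T3. simpl. field. }
  destruct (small_nonzero Q HdQ Hn) as [d2 [Hd2 HQnz]].
  set (d' := Rmin (Rmin d d2) 1).
  assert (Hd' : 0 < d') by (unfold d'; repeat apply Rmin_pos; lra).
  assert (Hd'1 : d' <= 1) by apply Rmin_r.
  assert (Hd'2 : d' <= d) by (unfold d'; eapply Rle_trans; [apply Rmin_l|apply Rmin_l]).
  assert (Hd'3 : d' <= d2) by (unfold d'; eapply Rle_trans; [apply Rmin_l|apply Rmin_r]).
  assert (Hbound : forall z, 0 < z < d' ->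
            Rabs (peval Dl z) <= Rabs (peval Q z) * ((Rabs C + 3) * z^4)).
  { intros z Hz. rewrite HD.
    assert (HQz : peval Q z <> 0) by (apply HQnz; lra).
    assert (Hzabs : Rabs z = z) by (apply Rabs_right; lra).
    specialize (Hb z ltac:(rewrite Hzabs; lra) HQz). rewrite Hzabs in Hb. simpl (3+1)%nat in Hb.
    assert (HE := exp_T3 z ltac:(rewrite Hzabs; lra)). rewrite Hzabs in HE.
    replace (peval P z - peval Q z * T3 z)
      with (peval Q z * ((peval P z / peval Q z - exp z) + (exp z - T3 z))) by (field; auto).
    rewrite Rabs_mult. apply Rmult_le_compat_l; [apply Rabs_pos|].
    eapply Rle_trans; [apply Rabs_triang|].
    assert (C * z^4 <= Rabs C * z^4) by (apply Rmult_le_compat_r; [apply pow_le; lra| apply Rle_abs]).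
    lra. }
  destruct (Req_dec q0 0) as [H0|H0].
  -
    exfalso.
    assert (Hb5 : forall z, 0 < z < d' -> Rabs (peval Dl z) <= ((Rabs q1 + Rabs q2) * (Rabs C + 3)) * z^5).
    { intros z Hz. eapply Rle_trans; [apply Hbound; auto|].
      assert (HQ : Rabs (peval Q z) <= (Rabs q1 + Rabs q2) * z).
      { rewrite RQ, H0. replace (0 + q1 * z + q2 * z ^ 2) with (z * (q1 + q2 * z)) by ring.
        rewrite Rabs_mult, (Rabs_right z) by lra. rewrite Rmult_comm. apply Rmult_le_compat_r; [lra|].
        eapply Rle_trans; [apply Rabs_triang|]. rewrite Rabs_mult, (Rabs_right z) by lra.
        assert (Rabs q2 * z <= Rabs q2) by (assert (H := Rabs_pos q2); nra). lra. }
      assert (0 <= (Rabs C + 3) * z^4) by (apply Rmult_le_pos; [assert (H := Rabs_pos C); lra| apply pow_le; lra]).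
      replace ((Rabs q1 + Rabs q2) * (Rabs C + 3) * z ^ 5) with ((Rabs q1 + Rabs q2) * z * ((Rabs C + 3) * z ^ 4)) by ring.
      apply Rmult_le_compat_r; auto. }
    assert (Hc := coef_list 5 Dl _ d' Hd' Hb5).
    assert (E3 := Hc 3%nat ltac:(lia)). assert (E4 := Hc 4%nat ltac:(lia)).
    unfold Dl in E3, E4. simpl in E3, E4.
    apply HN. rewrite H0 in E3. split; auto. split; lra.
  - assert (Hb4 : forall z, 0 < z < d' -> Rabs (peval Dl z) <= (sum_abs Q * (Rabs C + 3)) * z^4).
    { intros z Hz. eapply Rle_trans; [apply Hbound; auto|].
      assert (HQ : Rabs (peval Q z) <= sum_abs Q) by (apply peval_bound; rewrite Rabs_right; lra).
      assert (0 <= (Rabs C + 3) * z^4) by (apply Rmult_le_pos; [assert (H := Rabs_pos C); lra| apply pow_le; lra]).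
      rewrite Rmult_assoc. apply Rmult_le_compat_r; auto. }
    assert (Hc := coef_list 4 Dl _ d' Hd' Hb4).
    assert (E0 := Hc 0%nat ltac:(lia)). assert (E1 := Hc 1%nat ltac:(lia)).
    assert (E2 := Hc 2%nat ltac:(lia)). assert (E3 := Hc 3%nat ltac:(lia)).
    unfold Dl in E0, E1, E2, E3. simpl in E0, E1, E2, E3.
    exists (q1/q0). intro x. rewrite RP, RQ, Qv_eq, Pv_eq. unfold bb, pp.
    assert (Hp0 : p0 = q0) by lra. assert (Hp1 : p1 = q1 + q0) by lra.
    assert (Hq2 : q2 = -(q1/2 + q0/6)) by lra. assert (Hp2 : p2 = q2 + q1 + q0/2) by lra.
    rewrite Hp2, Hp0, Hp1, Hq2. field. auto.
Qed.

Theorem mainTheorem13 :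
  (* R_{2/2,3} = 1 + sqrt 3 *)
  is_lub (Rmnp_set 2 2 3) (1 + sqrt 3) /\
  (* every element of Pi_{2/2,3} is some psi_a *)
  (forall P Q, in_Pi 2 2 3 P Q ->
     exists a : R, forall x, peval P x * peval (Qa a) x = peval (Pa a) x * peval Q x) /\
  (* attained by a = -1 + 1/sqrt 3 *)
  is_lub (R_set (Pa a_star) (Qa a_star)) (1 + sqrt 3) /\
  (* strictly smaller otherwise *)
  (forall a : R, a <> a_star ->
     exists s, s < 1 + sqrt 3 /\ is_upper_bound (R_set (Pa a) (Qa a)) s).
Proof.
  assert (Hs1 := sqrt3_gt).
  split; [|split; [exact classify|split; [exact astar_lub|exact other_bound]]].
  split.
  - intros r [Hr|[P [Q [HPi [Hr Ham]]]]]; [lra|].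
    destruct (classify P Q HPi) as [a Ha].
    destruct HPi as [_ [HdQ [HnQ _]]].
    destruct (Req_dec a a_star) as [->|Hne].
    + destruct (Rle_lt_dec r (1 + sqrt 3)) as [|Hlt]; auto. exfalso.
      destruct (core a_star P Q r (-r) HdQ HnQ Ha Ham ltac:(lra)) as [_ HD].
      specialize (HD 1%nat). assert (H := astar_neg (-r) ltac:(lra)). lra.
    + destruct (fail_pt a Hne) as [x0 [Hx0 Hf]].
      assert (H := upper_gen a P Q r Hne HdQ HnQ Ha x0 Hx0 Hf Ham). lra.
  - intros b Hb. apply Hb. right. exists (Pa a_star), (Qa a_star).
    split; [apply Pa_in_Pi|]. split; [lra|]. apply astar_am. lra.
Qed.
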